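(* Let $r,K,q\in\mathbb{Z}_{++}$, $A\in\mathbb{R}^{r\times r}$ and $V\in\mathbb{R}^{q\times r}$. Let $U,\tilde U\in\mathbb{R}^{r\times K}$ be matrices each of whose columns has Euclidean norm at most $1$. Define $F(U)=\mathrm{Clip}\big(VU\,\mathrm{Softmax}(U^\top AU/\sqrt r)\big)$. Then $$\|F(U)-F(\tilde U)\|_F^2\le 2K\|V\|_\sigma^2\Big(1+\frac{4K\|A\|_\sigma^2}{r}\Big)\|U-\tilde U\|_F^2 .$$
   Context: $\mathrm{Softmax}$ is applied to each column of the $K\times K$ matrix separately. $\mathrm{Clip}$ maps each column $c$ of its matrix argument to $c/\max\{1,\|c\|_2\}$. $\|\cdot\|_\sigma$ is the operator (spectral) norm and $\|\cdot\|_F$ the Frobenius norm. *)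

(* Defs.v *)
From HB Require Import structures.
From mathcomp Require Import all_boot all_order all_algebra.
From mathcomp Require Import all_classical all_reals all_analysis.
Set Implicit Arguments. Unset Strict Implicit. Unset Printing Implicit Defensive.
Import Order.TTheory GRing.Theory Num.Theory.
Local Open Scope ring_scope.
Local Open Scope classical_set_scope.

Section Defs.
Variable R : realType.

Definition vnorm2 (n : nat) (x : 'cV[R]_n) : R :=
  Num.sqrt (\sum_(i < n) x i 0 ^+ 2).

Definition frob (m n : nat) (M : 'M[R]_(m, n)) : R :=
  Num.sqrt (\sum_(i < m) \sum_(j < n) M i j ^+ 2).

Definition opnorm (m n : nat) (M : 'M[R]_(m, n)) : R :=
  sup [set vnorm2 (M *m x) | x in [set x : 'cV[R]_n | vnorm2 x <= 1]].

Definition softmax (K : nat) (M : 'M[R]_K) : 'M[R]_K :=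
  \matrix_(i < K, j < K) (expR (M i j) / \sum_(k < K) expR (M k j)).

Definition clip (m n : nat) (M : 'M[R]_(m, n)) : 'M[R]_(m, n) :=
  \matrix_(i < m, j < n) (M i j / Num.max 1 (vnorm2 (col j M))).

Definition attnF (r K q : nat) (A : 'M[R]_r) (V : 'M[R]_(q, r))
  (U : 'M[R]_(r, K)) : 'M[R]_(q, K) :=
  clip (V *m U *m softmax ((Num.sqrt (r%:R))^-1 *: (U^T *m A *m U))).

End Defs.

(* Main.v *)
Require Import Defs.
From HB Require Import structures.
From mathcomp Require Import all_boot all_order all_algebra.
From mathcomp Require Import all_classical all_reals all_analysis.
Import Order.TTheory GRing.Theory Num.Theory.
Local Open Scope ring_scope.
From mathcomp Require Import ring lra.
Set Implicit Arguments. Unset Strict Implicit. Unset Printing Implicit Defensive.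

Section Aux.
Variable R : realType.

Lemma sum_mul2 n (f g : 'I_n -> R) :
  (\sum_i f i) * (\sum_k g k) = \sum_i \sum_k f i * g k.
Proof. rewrite big_distrl /=; apply: eq_bigr => i _; by rewrite big_distrr. Qed.

Lemma wCS n (w a b : 'I_n -> R) : (forall i, 0 <= w i) ->
  (\sum_i w i * a i * b i)^+2 <= (\sum_i w i * a i ^+2) * (\sum_i w i * b i ^+ 2).
Proof.
move=> w0.
have H : 0 <= \sum_i \sum_k w i * w k * (a i * b k - a k * b i)^+2.
  apply: sumr_ge0 => i _; apply: sumr_ge0 => k _.
  by rewrite mulr_ge0 ?sqr_ge0 ?mulr_ge0.
have E : \sum_i \sum_k w i * w k * (a i * b k - a k * b i)^+2 =
   \sum_i \sum_k (w i * a i ^+ 2 * (w k * b k ^+ 2)) +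
   \sum_i \sum_k (w k * a k ^+ 2 * (w i * b i ^+ 2)) -
   2 * \sum_i \sum_k (w i * a i * b i * (w k * a k * b k)).
  rewrite mulr_sumr -big_split -sumrB /=; apply: eq_bigr => i _.
  rewrite mulr_sumr -big_split -sumrB /=; apply: eq_bigr => k _.
  ring.
have X : \sum_i \sum_k (w k * a k ^+ 2 * (w i * b i ^+ 2)) =
   \sum_i \sum_k (w i * a i ^+ 2 * (w k * b k ^+ 2)) by rewrite exchange_big.
rewrite X in E.
rewrite expr2 !sum_mul2.
lra.
Qed.

Lemma sum1r n (h : 'I_n -> R) : \sum_i 1 * h i = \sum_i h i.
Proof. by apply: eq_bigr => i _; rewrite mul1r. Qed.
Lemma sumr1 n (h : 'I_n -> R) : \sum_i h i * 1 = \sum_i h i.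
Proof. by apply: eq_bigr => i _; rewrite mulr1. Qed.

Lemma CS n (f g : 'I_n -> R) :
  (\sum_i f i * g i)^+2 <= (\sum_i f i ^+ 2) * (\sum_i g i ^+ 2).
Proof.
have := @wCS n (fun=> 1) f g (fun=> ler01).
rewrite !sum1r; under eq_bigr do rewrite mul1r; done.
Qed.

Lemma Jensen n (w a : 'I_n -> R) : (forall i, 0 <= w i) ->
  (\sum_i w i * a i)^+2 <= (\sum_i w i) * (\sum_i w i * a i ^+ 2).
Proof.
move=> w0; have := @wCS n w a (fun=> 1) w0.
by rewrite expr1n !sumr1 mulrC.
Qed.

Lemma abs_le_sq (p N : R) : 0 <= N -> p ^+ 2 <= N ^+ 2 -> `|p| <= N.
Proof.
move=> N0 h; rewrite ler_norml; apply/andP; split; nra.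
Qed.

Lemma CSabs n (f g : 'I_n -> R) (al be : R) : 0 <= al -> 0 <= be ->
  \sum_i f i ^+ 2 <= al ^+ 2 -> \sum_i g i ^+ 2 <= be ^+ 2 ->
  `|\sum_i f i * g i| <= al * be.
Proof.
move=> a0 b0 hf hg; apply: abs_le_sq; first exact: mulr_ge0.
apply: (le_trans (CS f g)); rewrite exprMn.
by apply: ler_pM => //; apply: sumr_ge0 => i _; exact: sqr_ge0.
Qed.

Lemma lincomb m n (M : 'M[R]_(m,n)) (x nn : 'I_n -> R) :
  (forall i, 0 <= nn i) -> (forall i, \sum_k M k i ^+ 2 <= nn i ^+ 2) ->
  \sum_k (\sum_i M k i * x i) ^+ 2 <= (\sum_i `|x i| * nn i) ^+ 2.
Proof.
move=> n0 hn.
rewrite expr2 sum_mul2.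
under eq_bigr do rewrite expr2 sum_mul2.
rewrite exchange_big /=; apply: ler_sum => i _.
rewrite exchange_big /=; apply: ler_sum => l _.
have -> : \sum_k M k i * x i * (M k l * x l) = x i * x l * \sum_k M k i * M k l.
  rewrite mulr_sumr; apply: eq_bigr => k _; ring.
apply: (le_trans (ler_norm _)).
rewrite !normrM.
have h := CSabs (f := fun k => M k i) (g := fun k => M k l) (n0 i) (n0 l) (hn i) (hn l).
rewrite [X in _ <= X]mulrACA; by apply: ler_wpM2l => //.
Qed.

Lemma sqrt_le (a b : R) : 0 <= b -> (Num.sqrt a <= b) = (a <= b ^+ 2).
Proof. by move=> hb; rewrite -{1}(ger0_norm hb) -sqrtr_sqr ler_sqrt ?sqr_ge0. Qed.

Lemma sq_ge0 n (f : 'I_n -> R) : 0 <= \sum_i f i ^+ 2.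
Proof. by apply: sumr_ge0 => i _; exact: sqr_ge0. Qed.

Lemma sqV_scale n (c : R) (x : 'cV[R]_n) :
  \sum_i (c *: x) i 0 ^+ 2 = c ^+ 2 * \sum_i x i 0 ^+ 2.
Proof. rewrite mulr_sumr; apply: eq_bigr => i _; rewrite mxE; ring. Qed.

Lemma vnorm2_0 n : vnorm2 (0 : 'cV[R]_n) = 0.
Proof. by rewrite /vnorm2 big1 ?sqrtr0 // => i _; rewrite mxE expr2 mulr0. Qed.

Section Op.
Variables m n : nat.
Variable M : 'M[R]_(m,n).

Lemma mx_sq_bound (x : 'cV[R]_n) :
  \sum_k (M *m x) k 0 ^+ 2 <= (\sum_k \sum_i M k i ^+ 2) * \sum_i x i 0 ^+ 2.
Proof.
rewrite mulr_suml; apply: ler_sum => k _; rewrite mxE.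
exact: (CS (fun i => M k i) (fun i => x i 0)).
Qed.

Local Open Scope classical_set_scope.
Let S := [set vnorm2 (M *m x) | x in [set x : 'cV[R]_n | vnorm2 x <= 1]].

Lemma opS_sup : has_sup S.
Proof.
split.
  exists (vnorm2 (M *m 0)); exists 0 => //; by rewrite /= vnorm2_0.
exists (Num.sqrt (\sum_k \sum_i M k i ^+ 2)) => _ [x hx <-].
rewrite /vnorm2 ler_sqrt; last by apply: sumr_ge0 => k _; exact: sq_ge0.
apply: (le_trans (mx_sq_bound x)).
rewrite -[X in _ <= X]mulr1; apply: ler_wpM2l.
  by apply: sumr_ge0 => k _; exact: sq_ge0.
by move: hx; rewrite /= /vnorm2 sqrt_le // expr1n.
Qed.

Lemma opnorm_ge0 : 0 <= opnorm M.
Proof.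
apply: (le_trans _ (sup_upper_bound opS_sup _)); last first.
  exists 0; first by rewrite /= vnorm2_0. reflexivity.
by rewrite mulmx0 vnorm2_0.
Qed.

Lemma opnorm_sq (x : 'cV[R]_n) :
  \sum_k (M *m x) k 0 ^+ 2 <= opnorm M ^+ 2 * \sum_i x i 0 ^+ 2.
Proof.
have op0 := opnorm_ge0.
set s := \sum_i x i 0 ^+ 2.
have s0 : 0 <= s by exact: sq_ge0.
case: (eqVneq s 0) => [hs|hs].
  apply: (le_trans (mx_sq_bound x)); rewrite -/s hs !mulr0 //.
have sp : 0 < s by rewrite lt_def hs s0.
set t := Num.sqrt s.
have tp : 0 < t by rewrite sqrtr_gt0.
have t2 : t ^+ 2 = s by rewrite sqr_sqrtr.
have hy : vnorm2 (t^-1 *: x) <= 1.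
  rewrite /vnorm2 sqV_scale -/s exprVn t2 mulVf ?sqrtr1 //.
have : S (vnorm2 (M *m (t^-1 *: x))) by exists (t^-1 *: x).
move/(sup_upper_bound opS_sup).
rewrite -/(opnorm M) /vnorm2 -scalemxAr sqV_scale sqrt_le // exprVn t2.
move=> h.
have -> : \sum_k (M *m x) k 0 ^+ 2 = s^-1 * (\sum_k (M *m x) k 0 ^+ 2) * s.
  by field.
exact: ler_wpM2r.
Qed.
End Op.

Lemma proj_facts q (f : 'I_q -> R) :
  let a := Num.max 1 (Num.sqrt (\sum_i f i ^+ 2)) in
  1 <= a /\ \sum_i (f i / a) ^+ 2 <= 1 /\
  (a - 1) * (1 - \sum_i (f i / a) ^+ 2) = 0.
Proof.
move=> a.
have E : \sum_i (f i / a) ^+ 2 = (\sum_i f i ^+ 2) / a ^+ 2.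
  by rewrite mulr_suml; apply: eq_bigr => i _; rewrite exprMn exprVn.
have sf0 := sq_ge0 f.
rewrite E; case: (leP (Num.sqrt (\sum_i f i ^+ 2)) 1) => h.
  have -> : a = 1 by rewrite /a max_l.
  rewrite subrr mul0r expr1n divr1; split => //; split => //.
  by move: h; rewrite sqrt_le // expr1n.
have -> : a = Num.sqrt (\sum_i f i ^+ 2) by rewrite /a max_r // ltW.
rewrite sqr_sqrtr // mulfV; last first.
  by apply/eqP => h0; move: h; rewrite h0 sqrtr0 ltr10.
by rewrite subrr mulr0; split => //; exact: ltW.
Qed.

Lemma clip_lip q (f g : 'I_q -> R) :
  \sum_i (f i / Num.max 1 (Num.sqrt (\sum_i f i ^+ 2))
        - g i / Num.max 1 (Num.sqrt (\sum_i g i ^+ 2))) ^+ 2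
  <= \sum_i (f i - g i) ^+ 2.
Proof.
have [a1 [SA1 Ea]] := proj_facts f.
have [b1 [SB1 Eb]] := proj_facts g.
move: a1 SA1 Ea b1 SB1 Eb.
set a := Num.max 1 _; set b := Num.max 1 _ => a1 SA1 Ea b1 SB1 Eb.
have a0 : a != 0 by apply/eqP => h; move: a1; rewrite h ler10.
have b0 : b != 0 by apply/eqP => h; move: b1; rewrite h ler10.
set SA := \sum_i (f i / a) ^+ 2 in SA1 Ea *.
set SB := \sum_i (g i / b) ^+ 2 in SB1 Eb *.
set D := \sum_i (f i / a) * (g i / b).
set X := \sum_i (f i / a - g i / b) ^+ 2.
set P := \sum_i (f i / a - g i / b) * (f i - g i).
set Y := \sum_i (f i - g i) ^+ 2.
have PX : P - X = (a - 1) * (SA - D) + (b - 1) * (SB - D).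
  rewrite /P /X /SA /SB /D !mulrBr !mulr_sumr -!sumrB -big_split /=.
  apply: eq_bigr => i _; field; by apply/andP.
have CSD : D ^+ 2 <= SA * SB by exact: CS.
have T1 : 0 <= (a - 1) * (SA - D).
  case: (eqVneq a 1) => [->|ne]; first by rewrite subrr mul0r.
  have SA1' : SA = 1.
    move/eqP: Ea; rewrite mulf_eq0 subr_eq0 (negbTE ne) /= subr_eq0.
    by move/eqP.
  apply: mulr_ge0; first by rewrite subr_ge0.
  rewrite SA1' in CSD *; rewrite subr_ge0.
  have SB0 : 0 <= SB by exact: sq_ge0.
  nra.
have T2 : 0 <= (b - 1) * (SB - D).
  case: (eqVneq b 1) => [->|ne]; first by rewrite subrr mul0r.
  have SB1' : SB = 1.
    move/eqP: Eb; rewrite mulf_eq0 subr_eq0 (negbTE ne) /= subr_eq0.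
    by move/eqP.
  apply: mulr_ge0; first by rewrite subr_ge0.
  rewrite SB1' in CSD *; rewrite subr_ge0.
  have SA0 : 0 <= SA by exact: sq_ge0.
  nra.
have X0 : 0 <= X by exact: sq_ge0.
have Y0 : 0 <= Y by exact: sq_ge0.
have CSP : P ^+ 2 <= X * Y by exact: CS.
have XP : X <= P by lra.
nra.
Qed.

Lemma softmax_K1 K (x y : 'I_K -> R) : K = 1%N ->
  \sum_i `|expR (x i) / (\sum_k expR (x k)) - expR (y i) / (\sum_k expR (y k))| = 0.
Proof.
move=> eK; subst K; rewrite !big_ord1 !divff ?subrr ?normr0 //;
  exact: lt0r_neq0 (expR_gt0 _).
Qed.

Lemma sum_exp_gt0 K (x : 'I_K -> R) : (0 < K)%N -> 0 < \sum_k expR (x k).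
Proof.
move=> hK; pose i0 := Ordinal hK.
apply: (lt_le_trans (expR_gt0 (x i0))); rewrite (bigD1 i0) //= lerDl.
by apply: sumr_ge0 => k _; exact: ltW (expR_gt0 _).
Qed.

Lemma final_ineq (h d T : R) : 0 <= T -> 1 <= h -> 0 < d ->
  (h ^+ 2 + 1) * T <= 2 * (h ^+ 2 - 1) -> h * (2 - d) <= 2 -> T <= 8 / 5 * d.
Proof.
move=> T0 h1 d0 H1 H2.
have T2 : T < 2 by nra.
case: (leP (5 / 4) d) => hd; first by lra.
set u := h ^+ 2.
have u1 : 1 <= u by rewrite /u; nra.
have H3 : u * (2 - d) ^+ 2 <= 4.
  have : 0 <= h * (2 - d) by apply: mulr_ge0; lra.
  rewrite /u; nra.
have H4 : (2 - d) ^+ 2 * (u * (10 - 8 * d) - (10 + 8 * d)) <= 0.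
  have : (10 - 8 * d) * (u * (2 - d) ^+ 2) <= (10 - 8 * d) * 4.
    by apply: ler_wpM2l => //; lra.
  nra.
have H5 : u * (10 - 8 * d) - (10 + 8 * d) <= 0.
  have : 0 < (2 - d) ^+ 2 by apply: exprn_gt0; lra.
  nra.
nra.
Qed.

Lemma softmax_lip K (x y : 'I_K -> R) (d : R) : (0 < K)%N ->
  (forall i, `|x i - y i| <= d) ->
  \sum_i `|expR (x i) / (\sum_k expR (x k)) - expR (y i) / (\sum_k expR (y k))|
    <= 8 / 5 * d.
Proof.
move=> hK hd.
have d0 : 0 <= d by exact: le_trans (normr_ge0 _) (hd (Ordinal hK)).
case: (eqVneq d 0) => [d00|dn0].
  have exy : forall i, x i = y i.
    by move=> i; apply/eqP; rewrite -subr_eq0 -normr_le0 -d00 hd.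
  rewrite d00 mulr0 big1 // => i _.
  rewrite (eq_bigr (fun k => expR (y k))); last by move=> k _; rewrite exy.
  by rewrite exy subrr normr0.
have dp : 0 < d by rewrite lt_def dn0 d0.
set A := \sum_k expR (x k); set B := \sum_k expR (y k).
have Ap : 0 < A by exact: sum_exp_gt0.
have Bp : 0 < B by exact: sum_exp_gt0.
pose s i := expR (x i) / A.
pose t i := expR (y i - x i).
pose Z := B / A.
have Zp : 0 < Z by exact: divr_gt0.
have s0 : forall i, 0 <= s i.
  by move=> i; apply: divr_ge0; [exact: ltW (expR_gt0 _) | exact: ltW].
have ey : forall i, expR (y i) = expR (x i) * t i.
  by move=> i; rewrite /t -expRD addrC subrK.
have Ss : \sum_i s i = 1.
  by rewrite /s -mulr_suml divff // lt0r_neq0.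
have Sst : \sum_i s i * t i = Z.
  rewrite /Z /B mulr_suml; apply: eq_bigr => i _; rewrite ey /s; field.
  exact: lt0r_neq0.
have term : forall i, `|expR (x i) / A - expR (y i) / B| = s i * `|t i - Z| / Z.
  move=> i; have -> : expR (x i) / A - expR (y i) / B = s i * (Z - t i) / Z.
    rewrite ey /s /Z; field; apply/andP; split; exact: lt0r_neq0.
  by rewrite normrM normrM (ger0_norm (s0 i)) [`|Z^-1|]gtr0_norm ?invr_gt0 // distrC.
under eq_bigr do rewrite term.
rewrite -mulr_suml.
set Sm := \sum_i s i * `|t i - Z|.
pose H := expR d; pose L := expR (- d).
have tb : forall i, L <= t i <= H.
  move=> i; rewrite /L /H /t !ler_expR.
  by move: (hd i); rewrite ler_norml => /andP[? ?]; apply/andP; split; lra.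
have ZL : L <= Z.
  rewrite -Sst -[L]mul1r -Ss mulr_suml; apply: ler_sum => i _.
  by apply: ler_wpM2l => //; case/andP: (tb i).
have ZH : Z <= H.
  rewrite -Sst -[H]mul1r -Ss mulr_suml; apply: ler_sum => i _.
  by apply: ler_wpM2l => //; case/andP: (tb i).
have conv : (H - L) * Sm <= 2 * (H - Z) * (Z - L).
  have -> : 2 * (H - Z) * (Z - L) =
      (H * (Z - L) - L * (H - Z)) * \sum_i s i + ((H - Z) - (Z - L)) * \sum_i s i * t i.
    by rewrite Ss Sst; ring.
  rewrite /Sm mulr_sumr !mulr_sumr -big_split /=; apply: ler_sum => i _.
  case/andP: (tb i) => t1 t2.
  have s0i := s0 i.
  have : (H - L) * `|t i - Z| <= (H - t i) * (Z - L) + (t i - L) * (H - Z).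
    case: (leP (t i) Z) => htz.
      rewrite ler0_norm; last by lra.
      nra.
    rewrite gtr0_norm; last by lra.
    nra.
  move=> hc.
  have : s i * ((H - L) * `|t i - Z|) <= s i * ((H - t i) * (Z - L) + (t i - L) * (H - Z)).
    exact: ler_wpM2l.
  move=> hc2; apply: le_trans _ (le_trans hc2 _).
    by rewrite mulrCA.
  by rewrite le_eqVlt; apply/orP; left; apply/eqP; ring.
pose hh := expR (d / 2); pose ll := expR (- (d / 2)).
have hl : hh * ll = 1 by rewrite /hh /ll -expRD subrr expR0.
have HH : H = hh * hh by rewrite /H /hh -expRD; congr expR; field.
have LL : L = ll * ll by rewrite /L /ll -expRD; congr expR; field.
have hp : 0 < hh by exact: expR_gt0.
have lp : 0 < ll by exact: expR_gt0.
have hgl : ll < hh by rewrite /ll /hh ltr_expR; lra.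
have Sm0 : 0 <= Sm by apply: sumr_ge0 => i _; apply: mulr_ge0 => //.
have key : (H - Z) * (Z - L) <= (hh - ll) ^+ 2 * Z.
  rewrite HH LL -subr_ge0.
  have -> : (hh - ll) ^+ 2 * Z - (hh * hh - Z) * (Z - ll * ll) =
      (Z - hh * ll) ^+ 2 by ring.
  exact: sqr_ge0.
have C1 : (hh + ll) * Sm <= 2 * (hh - ll) * Z.
  have : (hh - ll) * ((hh + ll) * Sm) <= (hh - ll) * (2 * (hh - ll) * Z).
    rewrite HH LL in conv; nra.
  by rewrite ler_pM2l // subr_gt0.
have T0 : 0 <= Sm / Z by exact: divr_ge0 (ltW _).
have C2 : (hh ^+ 2 + 1) * (Sm / Z) <= 2 * (hh ^+ 2 - 1).
  have E1 : (hh ^+ 2 + 1) * (Sm / Z) = hh * ((hh + ll) * Sm) / Z.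
    have -> : hh ^+ 2 + 1 = hh * (hh + ll) by rewrite -hl; ring.
    by rewrite !mulrA.
  have E2 : 2 * (hh ^+ 2 - 1) = hh * (2 * (hh - ll) * Z) / Z.
    have -> : hh ^+ 2 - 1 = hh * (hh - ll) by rewrite -hl; ring.
    by field; exact: lt0r_neq0.
  by rewrite E1 E2 ler_pM2r ?invr_gt0 // ler_pM2l.
apply: (final_ineq T0 _ dp C2).
  have : 1 < hh by nra.
  exact: ltW.
have := expR_ge1Dx (- (d / 2)); rewrite -/ll => h1.
have : hh * (1 - d / 2) <= hh * ll by apply: ler_wpM2l; [exact: ltW | lra].
rewrite hl; lra.
Qed.

Lemma sq_add_le (a b : R) : (a + b) ^+ 2 <= 2 * a ^+ 2 + 2 * b ^+ 2.
Proof. have := sqr_ge0 (a - b); rewrite !expr2; lra. Qed.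

Lemma mxsubE m n (X Y : 'M[R]_(m,n)) i j : (X - Y) i j = X i j - Y i j.
Proof. by rewrite !mxE. Qed.

Lemma mxscaleE m n (c : R) (X : 'M[R]_(m,n)) i j : (c *: X) i j = c * X i j.
Proof. by rewrite !mxE. Qed.

Lemma softmaxE K (X : 'M[R]_K) i j :
  softmax X i j = expR (X i j) / \sum_k expR (X k j).
Proof. by rewrite mxE. Qed.

Lemma mul_col m n p (A : 'M[R]_(m,n)) (B : 'M[R]_(n,p)) j k :
  (A *m col j B) k 0 = (A *m B) k j.
Proof. by rewrite !mxE; apply: eq_bigr => l _; rewrite mxE. Qed.

Lemma quad_entry r K (A : 'M[R]_r) (U : 'M[R]_(r,K)) i j :
  (U^T *m A *m U) i j = \sum_k U k i * (A *m col j U) k 0.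
Proof.
rewrite -mulmxA mxE; apply: eq_bigr => k _.
by rewrite mul_col mxE.
Qed.

Lemma term_le_sum n (f : 'I_n -> R) i : (forall k, 0 <= f k) -> f i <= \sum_k f k.
Proof.
by move=> f0; rewrite (bigD1 i) //= lerDl; apply: sumr_ge0 => k _.
Qed.

Lemma sum_const1 K : \sum_(j < K) (1 : R) = K%:R.
Proof. by rewrite sumr_const card_ord. Qed.
End Aux.

Unset Implicit Arguments.

Theorem mainTheorem13 (R : realType) (r K q : nat)
  (hr : (0 < r)%N) (hK : (0 < K)%N) (hq : (0 < q)%N)
  (A : 'M[R]_r) (V : 'M[R]_(q, r)) (U Ut : 'M[R]_(r, K))
  (hU : forall j : 'I_K, vnorm2 (col j U) <= 1)
  (hUt : forall j : 'I_K, vnorm2 (col j Ut) <= 1) :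
  frob (attnF A V U - attnF A V Ut) ^+ 2 <=
    2 * K%:R * opnorm V ^+ 2 * (1 + 4 * K%:R * opnorm A ^+ 2 / r%:R)
      * frob (U - Ut) ^+ 2.
Proof.
rewrite /attnF.
set c := (Num.sqrt r%:R)^-1.
set M := c *: (U^T *m A *m U); set M' := c *: (Ut^T *m A *m Ut).
set S := softmax M; set S' := softmax M'.
set W := V *m U *m S; set W' := V *m Ut *m S'.
set D := U - Ut.
set oV := opnorm V; set oA := opnorm A.
have oV0 : 0 <= oV by exact: opnorm_ge0.
have oA0 : 0 <= oA by exact: opnorm_ge0.
set F2 := \sum_k \sum_i D k i ^+ 2.
have F20 : 0 <= F2 by apply: sumr_ge0 => k _; exact: sq_ge0.
have EF : frob D ^+ 2 = F2 by rewrite /frob sqr_sqrtr.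
rewrite EF.
pose nn i := Num.sqrt (\sum_k D k i ^+ 2).
have nn0 : forall i, 0 <= nn i by move=> i; exact: sqrtr_ge0.
have nn2 : forall i, nn i ^+ 2 = \sum_k D k i ^+ 2.
  by move=> i; rewrite /nn sqr_sqrtr //; exact: sq_ge0.
have Snn : \sum_i nn i ^+ 2 = F2.
  by rewrite /F2 exchange_big /=; apply: eq_bigr => i _; rewrite nn2.
have Spos : forall i j, 0 <= S i j.
  move=> i j; rewrite mxE; apply: divr_ge0; first exact: ltW (expR_gt0 _).
  exact: ltW (sum_exp_gt0 _ hK).
have Ssum : forall j, \sum_i S i j = 1.
  move=> j; under eq_bigr do rewrite mxE.
  by rewrite -mulr_suml divff // lt0r_neq0 // sum_exp_gt0.
have Sle1 : forall i j, S i j <= 1.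
  move=> i j; rewrite -(Ssum j). exact: (@term_le_sum R K (fun k => S k j) i (fun k => Spos k j)).
pose aj j := \sum_k (D *m S) k j ^+ 2.
pose bj j := \sum_k (Ut *m (S - S')) k j ^+ 2.
have stepA : frob (clip W - clip W') ^+ 2 <= \sum_j oV ^+ 2 * (2 * aj j + 2 * bj j).
  rewrite /frob sqr_sqrtr; last by apply: sumr_ge0 => k _; exact: sq_ge0.
  rewrite exchange_big /=; apply: ler_sum => j _.
  have vc : forall (X : 'M[R]_(q,K)), vnorm2 (col j X) = Num.sqrt (\sum_i X i j ^+ 2).
    by move=> X; rewrite /vnorm2; congr Num.sqrt; apply: eq_bigr => i _; rewrite mxE.
  have E1 : \sum_i (clip W - clip W') i j ^+ 2 =
     \sum_i (W i j / Num.max 1 (Num.sqrt (\sum_i W i j ^+ 2))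
             - W' i j / Num.max 1 (Num.sqrt (\sum_i W' i j ^+ 2))) ^+ 2.
    by apply: eq_bigr => i _; rewrite !mxE !vc.
  rewrite E1; apply: (le_trans (clip_lip (fun i => W i j) (fun i => W' i j))).
  set z := col j (U *m S - Ut *m S').
  have E2 : forall i, W i j - W' i j = (V *m z) i 0.
    move=> i; rewrite mul_col mulmxBr !mulmxA -/W -/W'.
    by rewrite [RHS]mxE [X in _ = _ + X]mxE.
  rewrite (eq_bigr (fun i => (V *m z) i 0 ^+ 2)); last by move=> i _; rewrite E2.
  apply: (le_trans (opnorm_sq V z)); rewrite -/oV; apply: ler_wpM2l; first exact: sqr_ge0.
  have E3 : forall k, z k 0 = (D *m S) k j + (Ut *m (S - S')) k j.
    move=> k; rewrite /z mxE.
    have -> : U *m S - Ut *m S' = D *m S + Ut *m (S - S').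
      by rewrite /D mulmxBl mulmxBr addrA subrK.
    by rewrite mxE.
  rewrite /aj /bj !mulr_sumr -big_split /=; apply: ler_sum => k _.
  by rewrite E3; apply: sq_add_le.
have stepD : \sum_j aj j <= K%:R * F2.
  have h1 : forall j, aj j <= \sum_i S i j * nn i ^+ 2.
    move=> j; rewrite /aj.
    rewrite (eq_bigr (fun k => (\sum_i D k i * S i j) ^+ 2)); last by move=> k _; rewrite mxE.
    apply: (le_trans (@lincomb R r K D (fun i => S i j) nn nn0 _)).
      by move=> i; rewrite nn2.
    rewrite (eq_bigr (fun i => S i j * nn i)); last by move=> i _; rewrite ger0_norm.
    have := @Jensen R K (fun i => S i j) nn (fun i => Spos i j).
    by rewrite Ssum mul1r.
  apply: (le_trans (ler_sum _ (fun j _ => h1 j))).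
  rewrite exchange_big /= -Snn mulr_sumr; apply: ler_sum => i _.
  rewrite -mulr_suml mulrC [X in _ <= X]mulrC; apply: ler_wpM2l; first exact: sqr_ge0.
  by rewrite -sum_const1; apply: ler_sum => j _.
have stepE : \sum_j bj j <= 4 * K%:R ^+ 2 * oA ^+ 2 / r%:R * F2.
  pose T j := \sum_i `|S i j - S' i j|.
  have hb : forall j, bj j <= T j ^+ 2.
    move=> j; rewrite /bj.
    rewrite (eq_bigr (fun k => (\sum_i Ut k i * (S - S') i j) ^+ 2)); last by move=> k _; rewrite mxE.
    apply: (le_trans (@lincomb R r K Ut (fun i => (S - S') i j) (fun=> 1) (fun=> ler01) _)).
      move=> i; rewrite expr1n; have := hUt i; rewrite /vnorm2 sqrt_le // expr1n.
      by rewrite (eq_bigr (fun k => Ut k i ^+2)) // => k _; rewrite mxE.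
    rewrite /T (eq_bigr (fun i => `|S i j - S' i j|)) //.
    by move=> i _; rewrite mulr1 mxsubE.
  have TS : forall j, T j = \sum_i `|expR (M i j) / (\sum_k expR (M k j))
                              - expR (M' i j) / (\sum_k expR (M' k j))|.
    by move=> j; apply: eq_bigr => i _; rewrite /S /S' !softmaxE.
  have T0 : forall j, 0 <= T j by move=> j; apply: sumr_ge0 => i _.
  case: (eqVneq K 1%N) => [K1|K1].
    apply: (le_trans (ler_sum _ (fun j _ => hb j))).
    rewrite big1; last by move=> j _; rewrite TS softmax_K1 // expr0n.
    apply: mulr_ge0 => //; apply: mulr_ge0; last by rewrite invr_ge0 ler0n.
    by apply: mulr_ge0; [apply: mulr_ge0 => //; exact: sqr_ge0 | exact: sqr_ge0].
  have c0 : 0 <= c by rewrite invr_ge0 sqrtr_ge0.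
  have c2 : c ^+ 2 = r%:R^-1 by rewrite exprVn sqr_sqrtr // ler0n.
  set F := Num.sqrt F2.
  have F0 : 0 <= F by exact: sqrtr_ge0.
  have FF : F ^+ 2 = F2 by rewrite sqr_sqrtr.
  have nnF : forall i, nn i <= F.
    move=> i; rewrite /nn /F ler_sqrt //; apply: ler_sum => k _.
    by apply: (@term_le_sum R K (fun i => D k i ^+ 2) i) => l; exact: sqr_ge0.
  have EM : forall i j, M i j - M' i j =
      c * (\sum_k D k i * (A *m col j U) k 0 + \sum_k Ut k i * (A *m col j D) k 0).
    move=> i j; rewrite /M /M' !mxscaleE !quad_entry -mulrBr; congr (c * _).
    rewrite -sumrB -big_split /=; apply: eq_bigr => k _.
    rewrite !mul_col /D mulmxBr !mxsubE; ring.
  have dM : forall i j, `|M i j - M' i j| <= c * oA * (F + nn j).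
    move=> i j; rewrite EM normrM (ger0_norm c0) -mulrA; apply: ler_wpM2l => //.
    apply: (le_trans (ler_normD _ _)).
    have X1 : `|\sum_k D k i * (A *m col j U) k 0| <= nn i * oA.
      apply: CSabs => //; first by rewrite nn2.
      apply: (le_trans (opnorm_sq A (col j U))); rewrite -/oA.
      rewrite -[X in _ <= X]mulr1; apply: ler_wpM2l; first exact: sqr_ge0.
      by have := hU j; rewrite /vnorm2 sqrt_le // expr1n.
    have X2 : `|\sum_k Ut k i * (A *m col j D) k 0| <= 1 * (oA * nn j).
      apply: CSabs => //; first exact: mulr_ge0.
        rewrite expr1n; have := hUt i; rewrite /vnorm2 sqrt_le // expr1n.
        by rewrite (eq_bigr (fun k => Ut k i ^+2)) // => k _; rewrite mxE.
      apply: (le_trans (opnorm_sq A (col j D))); rewrite -/oA exprMn nn2.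
      by rewrite (eq_bigr (fun k => D k j ^+2)) // => k _; rewrite mxE.
    have X3 : nn i * oA <= F * oA by apply: ler_wpM2r => //; exact: nnF.
    rewrite mul1r in X2; rewrite mulrDr; lra.
  have hT : forall j, T j <= 8 / 5 * (c * oA * (F + nn j)).
    move=> j; rewrite TS; apply: softmax_lip => // i; exact: dM.
  apply: (le_trans (ler_sum _ (fun j _ => hb j))).
  have hT2 : forall j, T j ^+ 2 <= 64 / 25 * (c ^+ 2 * oA ^+ 2) * (2 * F2 + 2 * nn j ^+ 2).
    move=> j; have := hT j; have := T0 j; have := nn0 j.
    have := sq_add_le F (nn j); rewrite FF => h1 h2 h3 h4.
    have : T j ^+ 2 <= (8 / 5 * (c * oA * (F + nn j))) ^+ 2.
      by rewrite ler_pXn2r // ?nnegrE //; apply: le_trans h4.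
    move=> h5; apply: (le_trans h5).
    have -> : (8 / 5 * (c * oA * (F + nn j))) ^+ 2 = 64 / 25 * (c ^+ 2 * oA ^+ 2) * (F + nn j) ^+ 2.
      by field.
    apply: ler_wpM2l => //.
    apply: mulr_ge0; first by [].
    by apply: mulr_ge0; exact: sqr_ge0.
  apply: (le_trans (ler_sum _ (fun j _ => hT2 j))).
  rewrite -mulr_sumr big_split /= sumr_const card_ord -mulr_sumr Snn c2.
  have K2 : 2 <= K%:R :> R.
    by rewrite (ler_nat R 2 K) ltn_neqAle eq_sym K1.
  have r0 : 0 < r%:R :> R by rewrite ltr0n.
  have -> : 4 * K%:R ^+ 2 * oA ^+ 2 / r%:R * F2 = oA ^+ 2 / r%:R * F2 * (4 * K%:R ^+ 2) by ring.
  have -> : 64 / 25 * (r%:R^-1 * oA ^+ 2) * (2 * F2 *+ K + 2 * F2)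
      = oA ^+ 2 / r%:R * F2 * (64 / 25 * (2 * K%:R + 2)).
    by rewrite -mulr_natr; field; rewrite lt0r_neq0.
  apply: ler_wpM2l.
    by apply: mulr_ge0 => //; apply: divr_ge0; [exact: sqr_ge0 | exact: ltW].
  nra.
apply: (le_trans stepA).
rewrite -mulr_sumr big_split /= -!mulr_sumr.
have : 0 <= oV ^+ 2 by exact: sqr_ge0.
have r0 : 0 < r%:R :> R by rewrite ltr0n.
set X := \sum_j aj j in stepD *; set Y := \sum_j bj j in stepE *.
have -> : 2 * K%:R * oV ^+ 2 * (1 + 4 * K%:R * oA ^+ 2 / r%:R) * F2 =
   oV ^+ 2 * (2 * (K%:R * F2) + 2 * (4 * K%:R ^+ 2 * oA ^+ 2 / r%:R * F2)).
  by field; rewrite lt0r_neq0.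
move=> oV2; apply: ler_wpM2l => //; lra.
Qed.
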